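(* Let $A=\mathbb C\langle u^{\pm1},v^{\pm1}\rangle$ and $h=u+v+u^{-1}+v^{-1}+u^{-1}v^{-1}$. The elements $\pi(h^k)$, $k=1,2,3,\dots$, of $A/[A,A]$ are linearly independent over $\mathbb C$.
   Context: $A$ is the group algebra over $\mathbb C$ of the free group on two generators $u,v$; $[A,A]$ is the linear span of all $ab-ba$, $a,b\in A$; $\pi:A\to A/[A,A]$ is the natural projection. *)

(* Defs.v *)
From HB Require Import structures.
From mathcomp Require Import all_boot all_order all_algebra.
From mathcomp Require Import complex.
From mathcomp Require Import Rstruct.
From Stdlib Require Import Rdefinitions.
Set Implicit Arguments. Unset Strict Implicit. Unset Printing Implicit Defensive.
Import GRing.Theory.
Local Open Scope ring_scope.

Definition CC : comNzRingType := (complex Rdefinitions.R : comNzRingType).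

(* Letters of the free group F_2 on u, v: (generator, inverted?)
   generator false = u, true = v. *)
Definition letter := (bool * bool)%type.
Definition lu : letter := (false, false).
Definition lui : letter := (false, true).
Definition lv : letter := (true, false).
Definition lvi : letter := (true, true).
Definition linv (x : letter) : letter := (x.1, ~~ x.2).

(* Free reduction of words: elements of F_2 are reduced words. *)
Definition cons_red (x : letter) (w : seq letter) : seq letter :=
  match w with
  | y :: w' => if y == linv x then w' else x :: w
  | [::] => [:: x]
  end.
Definition reduce (w : seq letter) : seq letter := foldr cons_red [::] w.

(* Elements of the group algebra A = C[F_2], given as finite formal sums
   sum_i c_i g_i, encoded by a list of pairs (c_i, g_i). *)
Definition galg := seq (CC * seq letter)%type.

Definition coef (a : galg) (g : seq letter) : CC :=
  \sum_(p <- a | reduce p.2 == g) p.1.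

Definition aeq (a b : galg) : Prop := forall g, coef a g = coef b g.

Definition aadd (a b : galg) : galg := a ++ b.
Definition ascale (c : CC) (a : galg) : galg := [seq (c * p.1, p.2) | p <- a].
Definition asub (a b : galg) : galg := aadd a (ascale (-1) b).
Definition amul (a b : galg) : galg :=
  [seq (p.1 * q.1, reduce (p.2 ++ q.2)) | p <- a, q <- b].
Definition aone : galg := [:: (1, [::])].
Definition apow (a : galg) (k : nat) : galg := iter k (amul a) aone.
Definition asum (s : seq galg) : galg := flatten s.

Definition in_commutator (x : galg) : Prop :=
  exists s : seq (CC * galg * galg),
    aeq x (asum [seq ascale t.1.1 (asub (amul t.1.2 t.2) (amul t.2 t.1.2)) | t <- s]).

Definition hh : galg :=
  [:: (1, [:: lu]); (1, [:: lv]); (1, [:: lui]); (1, [:: lvi]); (1, [:: lui; lvi])].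

(* Main.v *)
Require Import Defs.
From mathcomp Require Import all_boot all_order all_algebra.
From mathcomp Require Import zify ring.
Import Order.TTheory GRing.Theory Num.Theory.
Local Open Scope ring_scope.

Definition el (x : letter) : int := if x.1 then 0 else (if x.2 then -1 else 1).
Definition expu (w : seq letter) : int := \sum_(x <- w) el x.

Lemma expu_cons x w : expu (x :: w) = el x + expu w.
Proof. by rewrite /expu big_cons. Qed.

Lemma expu_cons_red x w : expu (cons_red x w) = el x + expu w.
Proof.
case: w => [|y w] /=; first by rewrite expu_cons.
case: ifP => [/eqP -> | _]; last by rewrite expu_cons.
rewrite expu_cons addrA; case: x => [[] []]; rewrite /el /=; ring.
Qed.

Lemma expu_reduce w : expu (reduce w) = expu w.
Proof.
elim: w => [|x w IH] //=.
by rewrite /reduce /= -/(reduce w) expu_cons_red IH expu_cons.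
Qed.

Lemma expu_cat w1 w2 : expu (w1 ++ w2) = expu w1 + expu w2.
Proof. by rewrite /expu big_cat. Qed.

Definition phi (m : int) (a : galg) : CC := \sum_(p <- a | expu p.2 == m) (p.1 : CC).

Lemma sum_pred1_seq (S : seq (seq letter)) (P : pred (seq letter)) r (x : CC) :
  uniq S -> r \in S ->
  \sum_(g <- S | P g) (if r == g then x else 0) = if P r then x else 0.
Proof.
elim: S => [|g S IH] //= /andP [gS uS].
rewrite in_cons big_cons => /orP [/eqP rg | rS].
  subst g; rewrite eqxx.
  have -> : \sum_(j <- S | P j) (if r == j then x else 0) = 0.
    apply: big1_seq => g /andP [_ gS']; case: eqP => // rg.
    by subst g; rewrite gS' in gS.
  rewrite addr0.
  by case: (P r).
rewrite IH //. have -> : (r == g) = false.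
  by apply/negbTE; apply/eqP => rg; subst g; rewrite rS in gS.
by case: (P g); rewrite ?add0r.
Qed.

Lemma phi_coef m (a : galg) (S : seq (seq letter)) :
  uniq S -> all (fun p => reduce p.2 \in S) a ->
  \sum_(g <- S | expu g == m) coef a g = phi m a.
Proof.
move=> uS; elim: a => [|p a IH] /=.
  move=> _; rewrite /phi big_nil; have c0 : forall g, coef [::] g = 0 by move=> g; rewrite /coef big_nil.
  elim: S {uS} => [|g S IHS]; rewrite ?big_nil // big_cons IHS c0; by case: ifP; rewrite ?addr0.
move=> /andP [pS aS]; rewrite /phi big_cons -/(phi m a) -IH //.
rewrite (eq_bigr (fun g => (if reduce p.2 == g then p.1 else 0) + coef a g)); last first.
  by move=> g _; rewrite /coef big_cons; case: ifP; rewrite ?add0r.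
rewrite big_split /= sum_pred1_seq // expu_reduce.
by case: ifP; rewrite ?add0r.
Qed.

Lemma aeq_phi m a b : aeq a b -> phi m a = phi m b.
Proof.
move=> H.
set S := undup ([seq reduce p.2 | p <- a] ++ [seq reduce p.2 | p <- b]).
have uS : uniq S by apply: undup_uniq.
have aS : all (fun p => reduce p.2 \in S) a.
  by apply/allP => p pa; rewrite mem_undup mem_cat (map_f (fun q : CC * seq letter => reduce q.2)).
have bS : all (fun p => reduce p.2 \in S) b.
  by apply/allP => p pb; rewrite mem_undup mem_cat orbC (map_f (fun q : CC * seq letter => reduce q.2)).
rewrite -(@phi_coef m a S uS aS) -(@phi_coef m b S uS bS).
by apply: eq_bigr => g _.
Qed.

Lemma phi_cat m a b : phi m (a ++ b) = phi m a + phi m b.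
Proof. by rewrite /phi big_cat. Qed.

Lemma phi_scale m c a : phi m (ascale c a) = c * phi m a.
Proof. by rewrite /phi /ascale big_map mulr_sumr. Qed.

Lemma phi_amul_raw m a b : phi m (amul a b) =
  \sum_(p <- a) \sum_(q <- b) (if expu p.2 + expu q.2 == m then p.1 * q.1 else 0).
Proof.
rewrite /phi /amul big_mkcond big_allpairs_dep /=.
by apply: eq_bigr => p _; apply: eq_bigr => q _; rewrite expu_reduce expu_cat.
Qed.

Lemma phi_amulC m a b : phi m (amul a b) = phi m (amul b a).
Proof.
rewrite !phi_amul_raw exchange_big /=.
by apply: eq_bigr => p _; apply: eq_bigr => q _; rewrite addrC mulrC.
Qed.

Lemma phi_amul m a b : phi m (amul a b) = \sum_(p <- a) p.1 * phi (m - expu p.2) b.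
Proof.
rewrite phi_amul_raw; apply: eq_bigr => p _.
rewrite /phi mulr_sumr [RHS]big_mkcond /=; apply: eq_bigr => q _.
have -> : (expu q.2 == m - expu p.2) = (expu p.2 + expu q.2 == m).
  by apply/eqP/eqP => H; [rewrite H; ring | rewrite -H; ring].
by case: ifP; rewrite ?mulr0.
Qed.

Lemma phi_asum_map m (T : Type) (f : T -> galg) (r : seq T) :
  phi m (asum [seq f x | x <- r]) = \sum_(x <- r) phi m (f x).
Proof.
elim: r => [|x r IH] /=; first by rewrite /phi !big_nil.
by rewrite big_cons -IH /asum /= phi_cat.
Qed.

Lemma phi_comm m s :
  phi m (asum [seq ascale t.1.1 (asub (amul t.1.2 t.2) (amul t.2 t.1.2)) | t <- s]) = 0.
Proof.
rewrite phi_asum_map big1 // => t _.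
by rewrite phi_scale /asub /aadd phi_cat phi_scale phi_amulC mulN1r subrr mulr0.
Qed.

Lemma phi_h m a : phi m (amul hh a) =
  phi (m - 1) a + phi m a + phi (m + 1) a + phi m a + phi (m + 1) a.
Proof.
rewrite phi_amul /hh !big_cons big_nil /= !expu_cons /expu big_nil /el /=.
have -> : m - (1 + 0) = m - 1 by lia.
have -> : m - (0 + 0) = m by lia.
have -> : m - (-1 + 0) = m + 1 by lia.
try have -> : m - (-1 + (0 + 0)) = m + 1 by lia.
by rewrite !mul1r addr0 !addrA.
Qed.

Lemma phi_pow k : (forall m : int, k%:Z < m -> phi m (apow hh k) = 0)
  /\ phi k%:Z (apow hh k) = 1.
Proof.
elim: k => [|k [IH1 IH2]].
  split.
    move=> m Hm; rewrite /apow /= /aone /phi big_cons big_nil /expu big_nil.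
    by case: eqP => // E; rewrite -E in Hm; rewrite ltxx in Hm.
  by rewrite /apow /= /aone /phi big_cons big_nil /expu big_nil eqxx addr0.
have -> : apow hh k.+1 = amul hh (apow hh k) by [].
split.
  move=> m Hm; rewrite phi_h !IH1; rewrite ?addr0 //; lia.
rewrite phi_h (IH1 (k.+1%:Z)) ?(IH1 (k.+1%:Z + 1)); try lia.
have -> : (k.+1%:Z - 1) = k%:Z by lia.
by rewrite IH2 !addr0.
Qed.

Theorem mainTheorem4 :
  forall (n : nat) (c : 'I_n -> CC),
    in_commutator (asum [seq ascale (c k) (apow hh k.+1) | k <- enum 'I_n]) ->
    forall k : 'I_n, c k = 0.
Proof.
move=> n c [s Hs].
have H : forall m, \sum_(k < n) c k * phi m (apow hh k.+1) = 0.
  move=> m; rewrite -[RHS](phi_comm m s) -(@aeq_phi m _ _ Hs) phi_asum_map big_enum /=.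
  by apply: eq_bigr => k _; rewrite phi_scale.
move=> k; have [d Hd] : exists d, (n - k <= d)%N by exists (n - k)%N.
elim: d k Hd => [|d IHd] k Hd.
  have := ltn_ord k; lia.
have := H (k.+1)%:Z; rewrite (bigD1 k) //= (proj2 (phi_pow k.+1)) mulr1.
suff -> : \sum_(i < n | i != k) c i * phi (k.+1)%:Z (apow hh i.+1) = 0.
  by rewrite addr0.
apply: big1 => j /eqP jk.
have [jlt|jgt] := ltnP j k.
  by rewrite (proj1 (phi_pow j.+1)) ?mulr0 //; lia.
rewrite IHd ?mul0r //.
have : nat_of_ord j <> nat_of_ord k by move=> E; apply: jk; apply: val_inj.
lia.
Qed.
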